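(* Let $\lambda\in\Lambda$ and let $(\beta_1,\dots,\beta_l)$ be a reduced $\lambda$-chain of roots. If $\alpha\in\Phi$ satisfies $(\lambda,\alpha^\vee)\ge0$, then $\#\{i:\beta_i=\alpha\}=(\lambda,\alpha^\vee)$ and $\#\{i:\beta_i=-\alpha\}=0$. In particular, if $\lambda$ is dominant all $\beta_i$ are positive roots, and if $\lambda$ is antidominant all $\beta_i$ are negative roots.
   Context: $\Phi$ is an irreducible (crystallographic) root system in $\mathfrak h_{\mathbb R}^*$ with positive roots $\Phi^+$, simple roots $\alpha_1,\dots,\alpha_r$, coroots $\alpha^\vee=2\alpha/(\alpha,\alpha)$, Weyl group $W$, weight lattice $\Lambda=\{\lambda:(\lambda,\alpha^\vee)\in\mathbb Z\ \forall\alpha\}$. $\lambda$ is dominant if $(\lambda,\alpha^\vee)\ge0$ for all $\alpha\in\Phi^+$, antidominant if $-\lambda$ is dominant. For $\alpha\in\Phi,k\in\mathbb Z$: $s_{\alpha,k}(\lambda)=\lambda-((\lambda,\alpha^\vee)-k)\alpha$. $W_{\mathrm{aff}}$ is generated by $s_0=s_{\alpha_0,-1}$ and $s_i=s_{\alpha_i,0}$, where $\alpha_0=-\theta$ and $\theta^\vee$ is the highest coroot. $\bar v\in W$ is the linear part of $v\in W_{\mathrm{aff}}$ ($\bar s_{\alpha,k}=s_\alpha$). $A_\circ=\{\lambda:0<(\lambda,\alpha^\vee)<1\ \forall\alpha\in\Phi^+\}$, and $v_{-\lambda}$ is the unique element of $W_{\mathrm{aff}}$ with $v_{-\lambda}(A_\circ)=A_\circ-\lambda$.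 The $\lambda$-chain of roots associated with a decomposition $v_{-\lambda}=s_{i_1}\cdots s_{i_l}$ is $(\beta_1,\dots,\beta_l)$, $\beta_j=\bar s_{i_1}\cdots\bar s_{i_{j-1}}(\alpha_{i_j})$; it is reduced if the decomposition has minimal length. *)

(* Defs.v *)
(* the ambient space h_R^* is 'rV[R]_r with R : realType and
   the standard dot product (any finite-dim. real Euclidean space is isometric
   to this). *)
From HB Require Import structures.
From mathcomp Require Import all_boot all_order all_algebra.
From mathcomp Require Import reals.
Set Implicit Arguments. Unset Strict Implicit. Unset Printing Implicit Defensive.
Import Order.TTheory GRing.Theory Num.Theory.
Local Open Scope ring_scope.

Section RootSystems.
Variables (R : realType) (r : nat).
Notation V := 'rV[R]_r.

Definition dot (u v : V) : R := (u *m v^T) 0 0.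
Definition coroot (a : V) : V := (2 / dot a a) *: a.
Definition pairing (l a : V) : R := dot l (coroot a).

Definition sref (a : V) (k : R) (mu : V) : V := mu - (pairing mu a - k) *: a.

(* Phi is an irreducible, reduced, crystallographic root system spanning V
   (spanning follows from the existence of a base below). *)
Definition is_irred_cryst_root_system (Phi : seq V) : Prop :=
  [/\ 0 \notin Phi,
      (forall a b, a \in Phi -> b \in Phi -> sref a 0 b \in Phi),
      (forall a b, a \in Phi -> b \in Phi -> pairing b a \is a Num.int),
      (forall a (c : R), a \in Phi -> c *: a \in Phi -> c = 1 \/ c = -1)
    & (forall P : pred V,
         (forall b c, b \in Phi -> c \in Phi -> P b -> ~~ P c -> dot b c = 0) ->
         {subset Phi <= P} \/ {subset Phi <= predC P})].

Definition is_simple_roots (Phi : seq V) (al : 'I_r -> V) : Prop :=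
  [/\ forall i, al i \in Phi,
      (forall c : 'I_r -> R, \sum_i c i *: al i = 0 -> forall i, c i = 0)
    & forall b, b \in Phi -> exists c : 'I_r -> int,
        b = \sum_i (c i)%:~R *: al i /\
        ((forall i, 0 <= c i) \/ (forall i, c i <= 0))].

Definition pos_root (Phi : seq V) (al : 'I_r -> V) (b : V) : Prop :=
  b \in Phi /\ exists c : 'I_r -> R, (forall i, 0 <= c i) /\ b = \sum_i c i *: al i.

Definition highest_coroot (Phi : seq V) (al : 'I_r -> V) (th : V) : Prop :=
  th \in Phi /\ forall b, b \in Phi -> exists c : 'I_r -> R,
    (forall i, 0 <= c i) /\ coroot th - coroot b = \sum_i c i *: coroot (al i).

Definition weight (Phi : seq V) (l : V) : Prop :=
  forall a, a \in Phi -> pairing l a \is a Num.int.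

Definition dominant (Phi : seq V) (al : 'I_r -> V) (l : V) : Prop :=
  forall a, pos_root Phi al a -> 0 <= pairing l a.

Definition antidominant (Phi : seq V) (al : 'I_r -> V) (l : V) : Prop :=
  dominant Phi al (- l).

Definition alcove0 (Phi : seq V) (al : 'I_r -> V) (x : V) : Prop :=
  forall a, pos_root Phi al a -> 0 < pairing x a /\ pairing x a < 1.

(* generators of W_aff are indexed by option 'I_r : None is s_0, Some i is s_i *)
Definition aroot (al : 'I_r -> V) (th : V) (i : option 'I_r) : V :=
  match i with None => - th | Some j => al j end.
Definition ashift (i : option 'I_r) : R :=
  match i with None => -1 | Some _ => 0 end.

Definition wmap (al : 'I_r -> V) (th : V) (w : seq (option 'I_r)) : V -> V :=
  foldr (fun i f => sref (aroot al th i) (ashift i) \o f) id w.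

Definition wlin (al : 'I_r -> V) (th : V) (w : seq (option 'I_r)) : V -> V :=
  foldr (fun i f => sref (aroot al th i) 0 \o f) id w.

(* w is a decomposition of v_{-lambda}: the product maps A_o onto A_o - lambda *)
Definition decomp_vml (Phi : seq V) (al : 'I_r -> V) (th l : V)
    (w : seq (option 'I_r)) : Prop :=
  forall y, (exists2 x, alcove0 Phi al x & wmap al th w x = y) <->
            alcove0 Phi al (y + l).

Definition reduced_word (al : 'I_r -> V) (th : V) (w : seq (option 'I_r)) : Prop :=
  forall w', wmap al th w' =1 wmap al th w -> (size w <= size w')%N.

Definition chain (al : 'I_r -> V) (th : V) (w : seq (option 'I_r)) : seq V :=
  [seq wlin al th (take k w) (aroot al th (nth None w k)) | k <- iota 0 (size w)].

End RootSystems.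

(* Main.v *)
Require Import Defs.
From HB Require Import structures.
From mathcomp Require Import all_boot all_order all_algebra.
From mathcomp Require Import reals.
From mathcomp Require Import ring lra zify.
Set Implicit Arguments. Unset Strict Implicit. Unset Printing Implicit Defensive.
Import Order.TTheory GRing.Theory Num.Theory.
Local Open Scope ring_scope.

Section Basic.
Variables (R : realType) (r : nat).
Local Notation V := 'rV[R]_r.
Implicit Types (u v y a b : V).

Lemma dotE u v : dot u v = \sum_j u 0 j * v 0 j.
Proof. by rewrite /dot mxE; apply: eq_bigr => j _; rewrite mxE. Qed.

Lemma dotC u v : dot u v = dot v u.
Proof. by rewrite !dotE; apply: eq_bigr => j _; rewrite mulrC. Qed.

Lemma dotDl u v y : dot (u + v) y = dot u y + dot v y.
Proof. by rewrite !dotE -big_split; apply: eq_bigr => j _; rewrite !mxE mulrDl. Qed.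

Lemma dotZl c u y : dot (c *: u) y = c * dot u y.
Proof. by rewrite !dotE mulr_sumr; apply: eq_bigr => j _; rewrite !mxE mulrA. Qed.

Lemma dotNl u y : dot (- u) y = - dot u y.
Proof. by rewrite -scaleN1r dotZl mulN1r. Qed.

Lemma dotBl u v y : dot (u - v) y = dot u y - dot v y.
Proof. by rewrite dotDl dotNl. Qed.

Lemma dotDr u v y : dot y (u + v) = dot y u + dot y v.
Proof. by rewrite dotC dotDl !(dotC y). Qed.
Lemma dotZr c u y : dot y (c *: u) = c * dot y u.
Proof. by rewrite dotC dotZl dotC. Qed.
Lemma dotNr u y : dot y (- u) = - dot y u.
Proof. by rewrite dotC dotNl dotC. Qed.
Lemma dotBr u v y : dot y (u - v) = dot y u - dot y v.
Proof. by rewrite dotDr dotNr. Qed.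
Lemma dot0l y : dot 0 y = 0.
Proof. by rewrite -(scale0r 0) dotZl mul0r. Qed.
Lemma dot0r y : dot y 0 = 0.
Proof. by rewrite dotC dot0l. Qed.

Lemma dot_ge0 u : 0 <= dot u u.
Proof. by rewrite dotE sumr_ge0 // => j _; rewrite -expr2 sqr_ge0. Qed.

Lemma dot_eq0 u : (dot u u == 0) = (u == 0).
Proof.
apply/idP/idP => [|/eqP->]; last by rewrite dot0l.
rewrite dotE psumr_eq0; last by move=> j _; rewrite -expr2 sqr_ge0.
move=> /allP H; apply/eqP/rowP => j; rewrite mxE; have := H j (mem_index_enum j).
by rewrite /= mulf_eq0 orbb => /eqP.
Qed.

Lemma pairingE y a : pairing y a = 2 * dot y a / dot a a.
Proof. by rewrite /pairing /coroot dotZr mulrAC. Qed.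

Lemma pairingDl u v a : pairing (u + v) a = pairing u a + pairing v a.
Proof. by rewrite /pairing dotDl. Qed.
Lemma pairingZl c u a : pairing (c *: u) a = c * pairing u a.
Proof. by rewrite /pairing dotZl. Qed.
Lemma pairingNl u a : pairing (- u) a = - pairing u a.
Proof. by rewrite /pairing dotNl. Qed.
Lemma pairingBl u v a : pairing (u - v) a = pairing u a - pairing v a.
Proof. by rewrite pairingDl pairingNl. Qed.
Lemma pairing0l a : pairing 0 a = 0.
Proof. by rewrite /pairing dot0l. Qed.
Lemma pairingNr u a : pairing u (- a) = - pairing u a.
Proof. by rewrite !pairingE dotNr dotNl dotNr opprK mulrN mulNr. Qed.

Lemma pairing_self a : a != 0 -> pairing a a = 2.
Proof.
move=> a0; rewrite pairingE -mulrA mulfV ?mulr1 //.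
by rewrite dot_eq0.
Qed.

Lemma coroot_invol a : a != 0 -> coroot (coroot a) = a.
Proof.
move=> a0; have d0 : dot a a != 0 by rewrite dot_eq0.
rewrite /coroot scalerA dotZl dotZr.
suff -> : 2 / (2 / dot a a * (2 / dot a a * dot a a)) * (2 / dot a a) = 1 by rewrite scale1r.
by field; rewrite d0.
Qed.
End Basic.

Section Refl.
Variables (R : realType) (r : nat).
Local Notation V := 'rV[R]_r.
Implicit Types (u v y a b : V).

Lemma srefE a k y : sref a k y = y - (pairing y a - k) *: a.
Proof. by []. Qed.

Lemma sref0D a u v : sref a 0 (u + v) = sref a 0 u + sref a 0 v.
Proof. rewrite !srefE !subr0 pairingDl scalerDl; by rewrite opprD addrACA. Qed.

Lemma sref0Z a c u : sref a 0 (c *: u) = c *: sref a 0 u.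
Proof. by rewrite !srefE !subr0 pairingZl scalerBr scalerA. Qed.

Lemma sref00 a : sref a 0 0 = 0.
Proof. by rewrite srefE pairing0l subr0 scale0r subr0. Qed.

Lemma srefD a k u v : sref a k (u + v) = sref a 0 u + sref a k v.
Proof.
rewrite !srefE !subr0 pairingDl -[pairing u a + _ - k]addrA scalerDl.
by rewrite opprD addrACA.
Qed.

Lemma dot_sref a u v : dot (sref a 0 u) (sref a 0 v) = dot u v.
Proof.
rewrite !srefE !subr0 !(dotBl, dotBr, dotZl, dotZr) !pairingE.
have [->|d0] := eqVneq (dot a a) 0.
  by rewrite !invr0 !mulr0 !mul0r !subr0.
rewrite (dotC a v). field; done.
Qed.

Lemma sref0K a u : sref a 0 (sref a 0 u) = u.
Proof.
rewrite !srefE !subr0 pairingBl pairingZl.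
have [a0|a0] := eqVneq a 0; first by rewrite a0 !scaler0 !subr0.
rewrite pairing_self // -addrA -opprD -scalerDl.
suff -> : pairing u a + (pairing u a - pairing u a * 2) = 0 by rewrite scale0r subr0.
ring.
Qed.

Lemma sref_self a : a != 0 -> sref a 0 a = - a.
Proof.
move=> a0; rewrite srefE subr0 pairing_self //.
by rewrite scaler_nat mulr2n opprD addrA subrr add0r.
Qed.

Lemma sref_k a k y : sref a k y = sref a 0 y + k *: a.
Proof. by rewrite !srefE subr0 scalerBl opprB addrCA [RHS]addrC. Qed.

Lemma srefK a k y : a != 0 -> sref a k (sref a k y) = y.
Proof.
move=> a0; rewrite !(sref_k a k) sref0D sref0K sref0Z sref_self //.
by rewrite scalerN addrNK.
Qed.

Lemma sref_opp a k : sref (- a) (- k) =1 sref a k.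
Proof. by move=> y; rewrite !srefE pairingNr -opprD scalerN scaleNr opprK. Qed.

End Refl.

Section Words.
Variables (R : realType) (r : nat) (al : 'I_r -> 'rV[R]_r) (th : 'rV[R]_r).
Local Notation V := 'rV[R]_r.
Implicit Types (u v y a b : V) (A B : seq (option 'I_r)).
Local Notation wlin := (wlin al th).
Local Notation wmap := (wmap al th).
Local Notation ar := (aroot al th).

Lemma wlin_cons i A y : wlin (i :: A) y = sref (ar i) 0 (wlin A y).
Proof. by []. Qed.
Lemma wmap_cons i A y : wmap (i :: A) y = sref (ar i) (@ashift R r i) (wmap A y).
Proof. by []. Qed.

Lemma wlinD A u v : wlin A (u + v) = wlin A u + wlin A v.
Proof. by elim: A => //= i A IH; rewrite IH sref0D. Qed.
Lemma wlinZ A c u : wlin A (c *: u) = c *: wlin A u.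
Proof. by elim: A => //= i A IH; rewrite IH sref0Z. Qed.
Lemma wlin0 A : wlin A 0 = 0.
Proof. by have := wlinZ A 0 0; rewrite !scale0r. Qed.
Lemma wlinN A u : wlin A (- u) = - wlin A u.
Proof. by rewrite -scaleN1r wlinZ scaleN1r. Qed.
Lemma dot_wlin A u v : dot (wlin A u) (wlin A v) = dot u v.
Proof. by elim: A => //= i A IH; rewrite dot_sref IH. Qed.
Lemma coroot_wlin A b : coroot (wlin A b) = wlin A (coroot b).
Proof. by rewrite /coroot wlinZ dot_wlin. Qed.
Lemma pairing_wlin A u v : pairing (wlin A u) (wlin A v) = pairing u v.
Proof. by rewrite /pairing coroot_wlin dot_wlin. Qed.

Lemma wlin_cat A B y : wlin (A ++ B) y = wlin A (wlin B y).
Proof. by elim: A => //= i A IH; rewrite IH. Qed.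
Lemma wmap_cat A B y : wmap (A ++ B) y = wmap A (wmap B y).
Proof. by elim: A => //= i A IH; rewrite IH. Qed.

Lemma wlin_revK A y : wlin A (wlin (rev A) y) = y.
Proof.
elim: A y => //= i A IH y.
by rewrite rev_cons -cats1 wlin_cat IH /= sref0K.
Qed.
Lemma wlin_Krev A y : wlin (rev A) (wlin A y) = y.
Proof. by rewrite -{2}(revK A) wlin_revK. Qed.

Lemma wmap_aff A y : wmap A y = wlin A y + wmap A 0.
Proof.
elim: A y => [|i A IH] y /=; first by rewrite addr0.
by rewrite IH srefD -[X in sref _ _ X]add0r srefD sref00 add0r.
Qed.

Lemma wmap_conj A a k y :
  wmap A (sref a k y) =
  sref (wlin A a) (k + pairing (wmap A 0) (wlin A a)) (wmap A y).
Proof.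
rewrite !srefE wmap_aff wlinD wlinN wlinZ (wmap_aff A y).
rewrite pairingDl pairing_wlin.
set t := wmap A 0; set p := pairing t _.
rewrite -!addrA; congr (_ + _); rewrite addrC; congr (_ + _).
by congr (- (_ *: _)); ring.
Qed.
End Words.

Section Comb.
Variables (l : nat) (D U : nat -> bool) (f : nat -> int).
Hypothesis HS : forall k, (k < l)%N -> f k.+1 = f k - (D k)%:Z + (U k)%:Z.
Hypothesis NR1 : forall j k, (j < k < l)%N -> D j -> U k -> f j.+1 = f k -> False.
Hypothesis NR2 : forall j k, (j < k < l)%N -> U j -> D k -> f j.+1 = f k -> False.

Lemma telescope : (count D (iota 0 l))%:Z - (count U (iota 0 l))%:Z = f 0%N - f l.
Proof.
have: forall m, (m <= l)%N ->
  (count D (iota 0 m))%:Z - (count U (iota 0 m))%:Z = f 0%N - f m.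
  elim=> [|m IH] hm; first by rewrite /= !subrr.
  rewrite -addn1 iotaD !count_cat /= !addn0 add0n.
  move: (IH (ltnW hm)); rewrite addn1 HS //; case: (D m); case: (U m) => /=; lia.
by apply.
Qed.

Lemma const_between j d : (j + d.+1 < l)%N ->
  ~~ has (fun i => D i || U i) (iota j.+1 d) -> f j.+1 = f (j + d.+1).
Proof.
move=> hl /hasPn H.
have: forall e, (e <= d)%N -> f j.+1 = f (j.+1 + e).
  elim=> [|e IH] he; first by rewrite addn0.
  have hi : (j.+1 + e) \in iota j.+1 d by rewrite mem_iota; apply/andP; split; lia.
  have := H _ hi; rewrite negb_or => /andP[/negbTE hD /negbTE hU].
  rewrite addnS [in RHS]HS ?hD ?hU /=; last by lia.
  by rewrite subr0 addr0 IH // ltnW.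
by move/(_ d (leqnn d)); rewrite addSnnS.
Qed.

Lemma no_mix d : forall j, (j + d.+1 < l)%N ->
  (D j && U (j + d.+1)) || (U j && D (j + d.+1)) -> False.
Proof.
elim/ltn_ind: d => d IH j hl Hm.
case: (boolP (has (fun i => D i || U i) (iota j.+1 d))) => [/hasP[i]|Hn]; last first.
  have Ef := const_between hl Hn.
  case/orP: Hm => /andP[h1 h2].
    by apply: (NR1 (j := j) (k := j + d.+1)) => //; apply/andP; split; lia.
  by apply: (NR2 (j := j) (k := j + d.+1)) => //; apply/andP; split; lia.
rewrite mem_iota => /andP[hi1 hi2] Hi.
pose e := (i - j.+1)%N.
have Ei : i = (j + e.+1)%N by rewrite /e; lia.
have Ek : (j + d.+1 = i + (d - e.+1).+1)%N by rewrite /e; lia.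
case/orP: Hm => /andP[h1 h2]; case/orP: Hi => Hi.
- apply: (IH (d - e.+1)%N _ i); first by rewrite /e; lia.
    by rewrite -Ek.
  by rewrite -Ek Hi h2.
- apply: (IH e _ j); first by rewrite /e; lia.
    by rewrite -Ei; lia.
  by rewrite -Ei Hi h1.
- apply: (IH e _ j); first by rewrite /e; lia.
    by rewrite -Ei; lia.
  by rewrite -Ei Hi h1 orbT.
- apply: (IH (d - e.+1)%N _ i); first by rewrite /e; lia.
    by rewrite -Ek.
  by rewrite -Ek Hi h2 orbT.
Qed.

Hypothesis HDU : forall k, (k < l)%N -> ~~ (D k && U k).

Lemma dichot : (forall k, (k < l)%N -> ~~ U k) \/ (forall k, (k < l)%N -> ~~ D k).
Proof.
case: (boolP (has U (iota 0 l))) => [/hasP[k]|/hasPn H]; last first.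
  by left => k hk; apply: H; rewrite mem_iota.
rewrite mem_iota add0n => /andP[_ hk] Uk; right => j hj; apply/negP => Dj.
have [hjk|hkj|ejk] := ltngtP j k.
- apply: (no_mix (d := (k - j.+1)%N) (j := j)); first by lia.
  have -> : (j + (k - j.+1).+1 = k)%N by lia.
  by rewrite Dj Uk.
- apply: (no_mix (d := (j - k.+1)%N) (j := k)); first by lia.
  have -> : (k + (j - k.+1).+1 = j)%N by lia.
  by rewrite Dj Uk orbT.
- by move: Uk; rewrite -ejk => Uj; have := HDU hj; rewrite Dj Uj.
Qed.

Lemma comb_count (n : int) : (0 <= n)%R -> f 0%N - f l = n ->
  (count D (iota 0 l))%:Z = n /\ count U (iota 0 l) = 0%N.
Proof.
move=> hn Ef; have Et := telescope; rewrite Ef in Et.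
have c0 (P : nat -> bool) : (forall k, (k < l)%N -> ~~ P k) -> count P (iota 0 l) = 0%N.
  move=> HP; apply/eqP; rewrite -leqn0 leqNgt -has_count; apply/hasPn => k.
  rewrite mem_iota add0n => /andP[_ hk]; exact: HP.
case: dichot => H.
  have cU := c0 _ H; rewrite cU in Et; split => //; lia.
have cD := c0 _ H; rewrite cD in Et; split; lia.
Qed.
End Comb.

Section Roots.
Variables (R : realType) (r : nat) (Phi : seq 'rV[R]_r) (al : 'I_r -> 'rV[R]_r)
  (th : 'rV[R]_r).
Hypothesis HPhi : is_irred_cryst_root_system Phi.
Hypothesis Hal : is_simple_roots Phi al.
Hypothesis Hth : highest_coroot Phi al th.
Local Notation V := 'rV[R]_r.
Implicit Types (u v y z a b : V).
Local Notation pos := (pos_root Phi al).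

Lemma root_neq0 b : b \in Phi -> b != 0.
Proof. by case: HPhi => H0 _ _ _ _ Hb; apply: contraNneq H0 => <-. Qed.

Lemma root_refl a b : a \in Phi -> b \in Phi -> sref a 0 b \in Phi.
Proof. by case: HPhi => _ H _ _ _; apply: H. Qed.

Lemma root_opp b : b \in Phi -> - b \in Phi.
Proof. by move=> Hb; rewrite -sref_self ?root_neq0 // root_refl. Qed.

Lemma root_int a b : a \in Phi -> b \in Phi -> pairing b a \is a Num.int.
Proof. by case: HPhi => _ _ H _ _; apply: H. Qed.

Lemma al_in i : al i \in Phi.
Proof. by case: Hal. Qed.

Lemma th_in : th \in Phi.
Proof. by case: Hth. Qed.

Lemma aroot_in i : aroot al th i \in Phi.
Proof. by case: i => [j|] /=; [exact: al_in | exact: root_opp th_in]. Qed.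

Lemma wlin_in A b : b \in Phi -> wlin al th A b \in Phi.
Proof. by elim: A => //= i A IH Hb; rewrite root_refl ?aroot_in ?IH. Qed.

Lemma dot_sumr z (c : 'I_r -> R) (f : 'I_r -> V) :
  dot z (\sum_i c i *: f i) = \sum_i c i * dot z (f i).
Proof.
elim/big_rec2: _ => [|i x y _ IH]; first by rewrite dot0r.
by rewrite dotDr dotZr IH.
Qed.

Lemma coef_uniq (c d : 'I_r -> R) :
  \sum_i c i *: al i = \sum_i d i *: al i -> forall i, c i = d i.
Proof.
case: Hal => _ Hind _ E i; apply/eqP; rewrite -subr_eq0; apply/eqP.
apply: (Hind (fun i => c i - d i)).
rewrite (eq_bigr (fun i => c i *: al i - d i *: al i)); last by move=> j _; rewrite scalerBl.
by rewrite sumrB E subrr.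
Qed.

Lemma root_dich b : b \in Phi -> pos b \/ pos (- b).
Proof.
move=> Hb; case: Hal => _ _ /(_ b Hb) [z [Eb [Hz|Hz]]].
  left; split => //; exists (fun i => (z i)%:~R); split => // i.
  by rewrite ler0z.
right; split; first exact: root_opp.
exists (fun i => (- z i)%:~R); split => [i|]; first by rewrite ler0z oppr_ge0.
rewrite Eb -sumrN; apply: eq_bigr => i _; by rewrite intrN scaleNr.
Qed.

Lemma sum_pos (c f : 'I_r -> R) :
  (forall i, 0 <= c i) -> (forall i, 0 < f i) -> (exists i, c i != 0) ->
  0 < \sum_i c i * f i.
Proof.
move=> Hc Hf [i0 Hi0]; rewrite lt_def sumr_ge0 ?andbT; last first.
  by move=> i _; rewrite mulr_ge0 // ltW.
apply/eqP => /psumr_eq0P H.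
have := H (fun i _ => mulr_ge0 (Hc i) (ltW (Hf i))) i0 isT.
by move/eqP; rewrite mulf_eq0 (negbTE Hi0) /= gt_eqF.
Qed.

Lemma dot_al_pos z i : 0 < pairing z (al i) -> 0 < dot z (al i).
Proof.
rewrite pairingE => H.
have hd : 0 < dot (al i) (al i).
  by rewrite lt_def dot_ge0 andbT dot_eq0 root_neq0 ?al_in.
by move: H; rewrite -mulrA pmulr_rgt0 // pmulr_lgt0 // invr_gt0.
Qed.

Lemma pairing_pos z b : (forall i, 0 < pairing z (al i)) -> pos b -> 0 < pairing z b.
Proof.
move=> Hz [Hb [c [Hc Eb]]].
have hd : 0 < dot b b by rewrite lt_def dot_ge0 andbT dot_eq0 root_neq0.
rewrite pairingE -mulrA pmulr_rgt0 // pmulr_lgt0 ?invr_gt0 //.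
rewrite Eb dot_sumr; apply: sum_pos => // [i|]; first exact: dot_al_pos.
have [/existsP//|/existsPn Hn] := boolP [exists i, c i != 0].
have := root_neq0 Hb; rewrite Eb big1 ?eqxx // => i _.
by rewrite (eqP (negbNE (Hn i))) scale0r.
Qed.

Lemma nz_coef (c : 'I_r -> R) (f : 'I_r -> V) :
  \sum_i c i *: f i != 0 -> exists i, c i != 0.
Proof.
have [/existsP//|/existsPn Hn] := boolP [exists i, c i != 0].
rewrite big1 ?eqxx // => i _.
by rewrite (eqP (negbNE (Hn i))) scale0r.
Qed.

Lemma hc_le z b : (forall i, 0 < pairing z (al i)) -> b \in Phi ->
  pairing z b <= pairing z th /\ (b != th -> pairing z b < pairing z th).
Proof.
move=> Hz Hb; case: Hth => Hth_in /(_ b Hb) [c [Hc E]].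
have : pairing z th - pairing z b = \sum_i c i * pairing z (al i).
  by rewrite /pairing -dotBr E dot_sumr.
move=> E2; split; first by rewrite -subr_ge0 E2 sumr_ge0 // => i _; rewrite mulr_ge0 // ltW.
move=> Hbt; rewrite -subr_gt0 E2; apply: sum_pos => //; apply: (@nz_coef c (fun i => coroot (al i))).
rewrite -E subr_eq0; apply: contra Hbt => /eqP Ec.
by rewrite -(coroot_invol (root_neq0 Hb)) -Ec coroot_invol // root_neq0.
Qed.

Lemma x1_ex : exists x1 : V, forall i, pairing x1 (al i) = 1.
Proof.
pose M : 'M[R]_r := \matrix_(i, j) coroot (al i) 0 j.
have uM : M \in unitmx.
  rewrite -row_free_unit -kermx_eq0; apply/negPn/negP => /rowV0Pn [v /sub_kermxP vM v0].
  move/negP: v0; apply; apply/eqP/rowP => i; rewrite mxE.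
  case: Hal => _ Hind _.
  have Hk j : dot (al j) (al j) != 0 by rewrite dot_eq0 root_neq0 ?al_in.
  have H0 : \sum_j (v 0 j * (2 / dot (al j) (al j))) *: al j = 0.
    move: vM; rewrite mulmx_sum_row => E; rewrite -[RHS]E; apply: eq_bigr => j _.
    rewrite -scalerA; congr (_ *: _); apply/rowP => k; by rewrite !mxE.
  have := Hind _ H0 i; move/eqP; rewrite mulf_eq0 mulf_eq0 invr_eq0 (negbTE (Hk i)).
  by rewrite orbF pnatr_eq0 orbF => /eqP.
exists ((const_mx 1 : 'rV[R]_r) *m invmx M^T) => i.
have E : (const_mx 1 : 'rV[R]_r) *m invmx M^T *m M^T = const_mx 1.
  by rewrite mulmxKV // unitmx_tr.
transitivity (((const_mx 1 : 'rV[R]_r) *m invmx M^T *m M^T) 0 i); last by rewrite E mxE.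
rewrite /pairing dotE [RHS]mxE; apply: eq_bigr => j _; by rewrite !mxE.
Qed.



Lemma al_pos j : pos (al j).
Proof.
split; first exact: al_in.
exists (fun i => (i == j)%:R); split => [i|]; first by rewrite ler0n.
rewrite (bigD1 j) //= eqxx scale1r big1 ?addr0 // => i /negbTE ->.
by rewrite scale0r.
Qed.

Lemma th_pos : pos th.
Proof.
have [x1 Hx1] := x1_ex.
have Hz : forall i, 0 < pairing x1 (al i) by move=> i; rewrite Hx1 ltr01.
case: (root_dich th_in) => // Hn.
have h1 := pairing_pos Hz Hn; rewrite pairingNr oppr_gt0 in h1.
have [h2 _] := hc_le Hz (root_opp th_in); rewrite pairingNr in h2.
by exfalso; lra.
Qed.

Lemma alc_iff z : alcove0 Phi al z <->
  (forall i, 0 < pairing z (al i)) /\ pairing z th < 1.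
Proof.
split => [H|[H1 H2] b Hb].
  split => [i|]; first by case: (H _ (al_pos i)).
  by case: (H _ th_pos).
split; first exact: pairing_pos.
case: Hb => Hb _; have [h _] := hc_le H1 Hb; exact: le_lt_trans h H2.
Qed.

Lemma alc_range z b : alcove0 Phi al z -> b \in Phi ->
  (pos b /\ 0 < pairing z b < 1) \/ (pos (- b) /\ -1 < pairing z b < 0).
Proof.
move=> Hz Hb; case: (root_dich Hb) => Hp; [left|right]; split => //.
  by case: (Hz _ Hp) => -> ->.
case: (Hz _ Hp); rewrite pairingNr oppr_gt0 ltrNl => -> ->; by [].
Qed.

Lemma floor_alc z1 z2 b : alcove0 Phi al z1 -> alcove0 Phi al z2 -> b \in Phi ->
  Num.floor (pairing z1 b) = Num.floor (pairing z2 b).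
Proof.
move=> H1 H2 Hb.
have E0 x : 0 < x < 1 -> Num.floor x = 0.
  move=> /andP[h1 h2]; apply: floor_def; rewrite add0r /= mulr0z mulr1z.
  by rewrite ltW.
have E1 x : -1 < x < 0 -> Num.floor x = -1.
  move=> /andP[h1 h2]; apply: floor_def; rewrite addNr /= intrN mulr0z mulr1z.
  by rewrite ltW.
case: (alc_range H1 Hb) => [[P1 h1]|[P1 h1]].
  by rewrite !E0 //; case: (H2 _ P1) => -> ->.
rewrite !E1 //; case: (H2 _ P1); rewrite pairingNr oppr_gt0 ltrNl => -> ->; by [].
Qed.

Lemma xc_alc x1 c : (forall i, pairing x1 (al i) = 1) -> 0 < c ->
  c * pairing x1 th < 1 -> alcove0 Phi al (c *: x1).
Proof.
move=> Hx Hc Hd; apply/alc_iff; split => [i|]; last by rewrite pairingZl.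
by rewrite pairingZl Hx mulr1.
Qed.

Lemma coroot_sref a v : coroot (sref a 0 v) = sref a 0 (coroot v).
Proof. by rewrite /coroot sref0Z dot_sref. Qed.

Lemma pairing_sref a u v : pairing (sref a 0 u) (sref a 0 v) = pairing u v.
Proof. by rewrite /pairing coroot_sref dot_sref. Qed.

Lemma pairing_sref_adj a u v : pairing (sref a 0 u) v = pairing u (sref a 0 v).
Proof. by rewrite -{1}(sref0K a v) pairing_sref. Qed.

Lemma posP j g : pos g -> g != al j -> g != - al j -> pos (sref (al j) 0 g).
Proof.
move=> [Hg [c [Hc Eg]]] H1 H2.
have Hs : sref (al j) 0 g \in Phi by rewrite root_refl ?al_in.
case: (Hal) => _ _ /(_ _ Hs) [z [Ez [Hz|Hz]]].
  split => //; exists (fun i => (z i)%:~R); split => // i; by rewrite ler0z.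
exfalso.
pose c' i := c i - (i == j)%:R * pairing g (al j).
have Es : sref (al j) 0 g = \sum_i c' i *: al i.
  rewrite (eq_bigr (fun i => c i *: al i - ((i == j)%:R * pairing g (al j)) *: al i));
    last by move=> i _; rewrite /c' scalerBl.
  rewrite sumrB -Eg srefE subr0; congr (_ - _).
  rewrite (bigD1 j) //= eqxx mul1r big1 ?addr0 // => i /negbTE ->.
  by rewrite mul0r scale0r.
have Ec := coef_uniq (etrans (esym Ez) Es).
have c0 i : i != j -> c i = 0.
  move=> /negbTE Hij; have := Ec i; rewrite /c' Hij mul0r subr0 => E.
  by apply/eqP; rewrite eq_le Hc andbT -E lerz0.
have Eg2 : g = c j *: al j.
  rewrite Eg (bigD1 j) //= big1 ?addr0 // => i Hij.
  by rewrite c0 // scale0r.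
have := HPhi; case=> _ _ _ Hred _.
case: (Hred (al j) (c j) (al_in j)); rewrite -?Eg2 // => Ecj.
  by move: H1; rewrite Eg2 Ecj scale1r eqxx.
by move: H2; rewrite Eg2 Ecj scaleN1r eqxx.
Qed.

Lemma n01 g : pos g -> g != th -> pairing th g = 0 \/ pairing th g = 1.
Proof.
move=> Hg Hgt; have Hgin : g \in Phi by case: Hg.
have [x1 Hx1] := x1_ex.
have Hz : forall i, 0 < pairing x1 (al i) by move=> i; rewrite Hx1 ltr01.
set D := pairing x1 th; set E := pairing x1 g.
have HE : 0 < E by exact: pairing_pos.
have [_ HED] := hc_le Hz Hgin; have {}HED := HED Hgt; rewrite -/D -/E in HED.
have HD : 0 < D by exact: lt_trans HE HED.
set n := pairing th g.
have key c : 0 < c -> c * D < 1 -> -1 < c * (E - D * n) < 1.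
  move=> hc hcD; have Ha := xc_alc Hx1 hc hcD.
  have Hs : sref th 0 g \in Phi by rewrite root_refl ?th_in.
  have : pairing (c *: x1) (sref th 0 g) = c * (E - D * n).
    rewrite pairingZl -pairing_sref_adj srefE subr0 pairingBl pairingZl.
    by [].
  move=> <-; case: (alc_range Ha Hs) => [[_ /andP[h1 h2]]|[_ /andP[h1 h2]]];
    apply/andP; split => //; lra.
have /intrP [nz En] : n \is a Num.int by rewrite /n root_int ?th_in.
have : (nz <= -1)%R \/ nz = 0 \/ nz = 1 \/ (2 <= nz)%R by lia.
case=> [h|[h|[h|h]]].
- have hn : n <= -1 by move: h; rewrite -(ler_int R) intrN mulr1z -En.
  set q := E - D * n.
  have hq : D < q by rewrite /q; nra.
  have hq0 : 0 < q by lra.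
  have c1 : 0 < q^-1 by rewrite invr_gt0.
  have c2 : q^-1 * D < 1 by rewrite mulrC ltr_pdivrMr // mul1r.
  have := key _ c1 c2.
  by rewrite -/q mulVf ?gt_eqF // ltxx andbF.
- by left; rewrite En h mulr0z.
- by right; rewrite En h mulr1z.
- have hn : 2 <= n by move: h; rewrite -(ler_int R) -En.
  set q := D * n - E.
  have hq : D < q by rewrite /q; nra.
  have hq0 : 0 < q by lra.
  have c1 : 0 < q^-1 by rewrite invr_gt0.
  have c2 : q^-1 * D < 1 by rewrite mulrC ltr_pdivrMr // mul1r.
  have := key _ c1 c2.
  have -> : E - D * n = - q by rewrite /q opprB.
  by rewrite mulrN mulVf ?gt_eqF // ltxx.
Qed.


Lemma adj_pos x i g : alcove0 Phi al x -> pos g ->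
  g != aroot al th i -> g != - aroot al th i ->
  0 < pairing (sref (aroot al th i) (@ashift R r i) x) g < 1.
Proof.
move=> Hx Hg H1 H2; case: i H1 H2 => [j|] /= H1 H2.
  rewrite pairing_sref_adj; case: (Hx _ (posP Hg H1 H2)) => -> ->; by [].
rewrite opprK in H2.
have [Hz Hxt] := (alc_iff x).1 Hx.
have Hgin : g \in Phi by case: Hg.
have [_ Hlt] := hc_le Hz Hgin; have {}Hlt := Hlt H2.
have Hg0 : 0 < pairing x g by case: (Hx _ Hg).
rewrite srefE pairingBl pairingZl !pairingNr.
rewrite pairingNl; case: (n01 Hg H2) => ->; apply/andP; split; lra.
Qed.

Lemma adj x i g : alcove0 Phi al x -> g \in Phi ->
  g != aroot al th i -> g != - aroot al th i ->
  Num.floor (pairing (sref (aroot al th i) (@ashift R r i) x) g) =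
  Num.floor (pairing x g).
Proof.
move=> Hx Hg H1 H2.
have E0 (y : R) : 0 < y < 1 -> Num.floor y = 0.
  move=> /andP[h1 h2]; apply: floor_def; rewrite add0r /= mulr0z mulr1z.
  by rewrite ltW.
have E1 (y : R) : -1 < y < 0 -> Num.floor y = -1.
  move=> /andP[h1 h2]; apply: floor_def; rewrite addNr /= intrN mulr0z mulr1z.
  by rewrite ltW.
case: (root_dich Hg) => Hp.
  by rewrite !E0 ?adj_pos //; case: (Hx _ Hp) => -> ->.
have : 0 < pairing (sref (aroot al th i) (@ashift R r i) x) (- g) < 1.
  apply: adj_pos => //; by rewrite ?eqr_opp // eqr_oppLR.
rewrite pairingNr oppr_gt0 ltrNl => /andP[a b]; rewrite E1 ?a ?b //.
by rewrite E1 //; case: (Hx _ Hp); rewrite pairingNr oppr_gt0 ltrNl => -> ->.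
Qed.

Lemma alc_ex : exists x, alcove0 Phi al x.
Proof.
have [x1 Hx1] := x1_ex.
have Hz : forall i, 0 < pairing x1 (al i) by move=> i; rewrite Hx1 ltr01.
have HD : 0 < pairing x1 th by apply: pairing_pos => //; exact: th_pos.
exists ((2 * pairing x1 th)^-1 *: x1); apply: xc_alc => //.
  by rewrite invr_gt0 mulr_gt0.
rewrite invfM -mulrA mulVf ?gt_eqF // mulr1 invf_lt1 //; lra.
Qed.

Lemma floor_eqI (y : R) (z : int) : z%:~R <= y -> y < z%:~R + 1 -> Num.floor y = z.
Proof. by move=> h1 h2; apply: floor_def; rewrite h1 intrD mulr1z. Qed.

Lemma ashift_int i : @ashift R r i \is a Num.int.
Proof. by case: i => [j|] /=; rewrite ?int_num0 // rpredN int_num1. Qed.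

Lemma T_int A b : b \in Phi -> pairing (wmap al th A 0) b \is a Num.int.
Proof.
elim: A b => [|i A IH] b Hb /=; first by rewrite pairing0l int_num0.
rewrite srefE pairingBl pairingZl; apply: rpredB; first exact: IH.
apply: rpredM; last by rewrite root_int ?aroot_in.
by apply: rpredB; [apply: IH; exact: aroot_in | exact: ashift_int].
Qed.

Lemma tpos x i : alcove0 Phi al x ->
  0 < pairing x (aroot al th i) - @ashift R r i < 1.
Proof.
move=> Hx; have [Hz Ht] := (alc_iff x).1 Hx.
case: i => [j|] /=.
  by rewrite subr0 Hz; case: (Hx _ (al_pos j)).
rewrite pairingNr; case: (Hx _ th_pos) => h1 h2; apply/andP; split; lra.
Qed.

Lemma pullback A x a : pairing (wmap al th A x) a =
  pairing x (wlin al th (rev A) a) + pairing (wmap al th A 0) a.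
Proof. by rewrite wmap_aff pairingDl -{1}(wlin_revK al th A a) pairing_wlin. Qed.

Section Chain.
Variables (l : V) (w : seq (option 'I_r)).
Hypothesis Hwt : weight Phi l.
Hypothesis Hdec : decomp_vml Phi al th l w.
Hypothesis Hred : reduced_word al th w.

Local Notation iw k := (nth None w k).
Definition beta k := wlin al th (take k w) (aroot al th (iw k)).
Definition mm k := @ashift R r (iw k) + pairing (wmap al th (take k w) 0) (beta k).

Lemma beta_in k : beta k \in Phi.
Proof. by rewrite /beta wlin_in ?aroot_in. Qed.

Lemma mm_int k : mm k \is a Num.int.
Proof. by rewrite /mm rpredD ?ashift_int ?T_int ?beta_in. Qed.

Lemma take_succ k y : (k < size w)%N -> wmap al th (take k.+1 w) y =
  wmap al th (take k w) (sref (aroot al th (iw k)) (@ashift R r (iw k)) y).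
Proof. by move=> hk; rewrite (take_nth None) // -cats1 wmap_cat. Qed.

Lemma step k y : (k < size w)%N ->
  wmap al th (take k.+1 w) y = sref (beta k) (mm k) (wmap al th (take k w) y).
Proof. by move=> hk; rewrite take_succ // wmap_conj. Qed.

Lemma tdiff x k : pairing (wmap al th (take k w) x) (beta k) - mm k =
  pairing x (aroot al th (iw k)) - @ashift R r (iw k).
Proof.
rewrite /mm /beta wmap_aff pairingDl pairing_wlin.
by rewrite opprD addrACA subrr addr0.
Qed.

Lemma no_repeat j k : (j < k < size w)%N ->
  sref (beta j) (mm j) =1 sref (beta k) (mm k) -> False.
Proof.
move=> /andP[hjk hk] Heq.
have hj : (j < size w)%N by exact: ltn_trans hk.
pose B := drop j.+1 (take k w); pose C := drop k.+1 w.
pose w' := take j w ++ B ++ C.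
have Etk : take k w = take j.+1 w ++ B by rewrite -{1}(cat_take_drop j.+1 (take k w)) take_takel.
have E : wmap al th w' =1 wmap al th w.
  move=> y; rewrite -{1}(cat_take_drop k.+1 w) wmap_cat.
  rewrite [wmap _ _ (take k.+1 w) _]step // -Heq.
  rewrite Etk wmap_cat [wmap _ _ (take j.+1 w) _]step // srefK ?root_neq0 ?beta_in //.
  by rewrite /w' !wmap_cat.
have := Hred E; rewrite /w' !size_cat size_takel ?(ltnW hj) // /B /C !size_drop size_takel ?(ltnW hk) //.
lia.
Qed.

Section Pt.
Variables (x : V) (a : V).
Hypothesis Hx : alcove0 Phi al x.
Hypothesis Ha : a \in Phi.

Definition hh k := pairing (wmap al th (take k w) x) a.
Definition ff k := Num.floor (hh k).

Lemma f_down k : (k < size w)%N -> beta k = a -> ff k.+1 = ff k - 1 /\ mm k = (ff k)%:~R.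
Proof.
move=> hk Eb; have /intrP [mz Em] := mm_int k.
have := tpos (iw k) Hx; rewrite -tdiff Eb -/(hh k) => /andP[t1 t2].
have Eh : hh k.+1 = mm k - (hh k - mm k).
  rewrite /hh step // Eb srefE pairingBl pairingZl pairing_self ?root_neq0 //.
  rewrite -/(hh k); ring.
have F1 : ff k = mz.
  by apply: floor_eqI; rewrite -Em; lra.
have F2 : ff k.+1 = mz - 1.
  by apply: floor_eqI; rewrite intrB mulr1z -Em Eh; lra.
by rewrite F1 F2 Em.
Qed.

Lemma f_up k : (k < size w)%N -> beta k = - a -> ff k.+1 = ff k + 1 /\ mm k = - (ff k.+1)%:~R.
Proof.
move=> hk Eb; have /intrP [mz Em] := mm_int k.
have := tpos (iw k) Hx; rewrite -tdiff Eb pairingNr -/(hh k) => /andP[t1 t2].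
have Eh : hh k.+1 = - mm k + (- hh k - mm k).
  rewrite /hh step // Eb srefE pairingBl pairingZl pairingNr pairingNl pairing_self ?root_neq0 //.
  rewrite -/(hh k); ring.
have F1 : ff k = - mz - 1.
  by apply: floor_eqI; rewrite intrB intrN mulr1z -Em; lra.
have F2 : ff k.+1 = - mz.
  by apply: floor_eqI; rewrite intrN -Em Eh; lra.
by rewrite F1 F2 Em intrN opprK subrK.
Qed.

Lemma f_same k : (k < size w)%N -> beta k != a -> beta k != - a -> ff k.+1 = ff k.
Proof.
move=> hk H1 H2; rewrite /ff /hh take_succ // (pullback _ (sref _ _ x)) (pullback _ x).
set g := wlin al th (rev (take k w)) a.
have /intrP [Pz EP] := T_int (take k w) Ha.
rewrite EP !floorDrz ?intr_int //; congr (_ + _).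
have Eg : wlin al th (take k w) g = a by rewrite /g wlin_revK.
apply: adj => //; first by rewrite /g wlin_in.
  by apply: contra H1 => /eqP Eg'; rewrite /beta -Eg -Eg'.
by apply: contra H2 => /eqP Eg'; rewrite /beta -Eg Eg' wlinN opprK.
Qed.

Lemma neq_opp b : b != 0 -> b != - b.
Proof.
move=> b0; apply: contra b0 => /eqP E; apply/eqP.
have : b *+ 2 = 0 by rewrite mulr2n {1}E addNr.
by rewrite -scaler_nat => /eqP; rewrite scaler_eq0 pnatr_eq0 /= => /eqP.
Qed.

Lemma count_lemma : 0 <= pairing l a ->
  (count (pred1 a) (chain al th w))%:R = pairing l a /\
  count (pred1 (- a)) (chain al th w) = 0%N.
Proof.
move=> Hl; have /intrP [nz En] := Hwt Ha.
have hn : (0 <= nz)%R by rewrite -(ler0z R) -En.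
have F0 : ff 0 = Num.floor (pairing x a) by rewrite /ff /hh take0.
have Fe : ff (size w) = Num.floor (pairing x a) - nz.
  rewrite /ff /hh take_size.
  set y := wmap al th w x.
  have Hy : alcove0 Phi al (y + l) by apply/(Hdec y).1; exists x.
  have -> : pairing y a = pairing (y + l) a + (- nz)%:~R.
    by rewrite pairingDl intrN -En; ring.
  by rewrite floorDrz ?intr_int // intrKfloor (floor_alc Hy Hx Ha).
have Ef : ff 0 - ff (size w) = nz by rewrite F0 Fe; ring.
pose D k := beta k == a; pose U k := beta k == - a.
have a0 := root_neq0 Ha.
have HDU k : (k < size w)%N -> ~~ (D k && U k).
  move=> _; rewrite /D /U; apply/negP => /andP[/eqP Eb /eqP E].
  by move: (neq_opp a0); rewrite -{1}Eb E eqxx.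
have HS k : (k < size w)%N -> ff k.+1 = ff k - (D k)%:Z + (U k)%:Z.
  move=> hk; rewrite /D /U.
  case: (eqVneq (beta k) a) => [Eb|Nb].
    have [-> _] := f_down hk Eb.
    by rewrite Eb (negbTE (neq_opp a0)) /= addr0.
  case: (eqVneq (beta k) (- a)) => [Eb|Nb2].
    by have [-> _] := f_up hk Eb; rewrite /= subr0.
  by rewrite f_same //= subr0 addr0.
have NR1 j k : (j < k < size w)%N -> D j -> U k -> ff j.+1 = ff k -> False.
  move=> hjk /eqP Ej /eqP Ek Ejk; have /andP[h1 h2] := hjk.
  have hj : (j < size w)%N by exact: ltn_trans h2.
  have [Fj Mj] := f_down hj Ej; have [Fk Mk] := f_up h2 Ek.
  apply: (no_repeat hjk) => y.
  rewrite Ej Ek Mj Mk Fk -Ejk Fj sref_opp.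
  by congr (sref _ _ _); rewrite subrK.
have NR2 j k : (j < k < size w)%N -> U j -> D k -> ff j.+1 = ff k -> False.
  move=> hjk /eqP Ej /eqP Ek Ejk; have /andP[h1 h2] := hjk.
  have hj : (j < size w)%N by exact: ltn_trans h2.
  have [Fj Mj] := f_up hj Ej; have [Fk Mk] := f_down h2 Ek.
  apply: (no_repeat hjk) => y.
  by rewrite Ej Ek Mj Mk -Ejk sref_opp.
have [cD cU] := comb_count HS NR1 NR2 HDU hn Ef.
rewrite /chain !count_map.
split.
  rewrite En -cD; by [].
exact: cU.
Qed.
End Pt.
End Chain.

Lemma main_result (l : V) (w : seq (option 'I_r)) :
  weight Phi l -> decomp_vml Phi al th l w -> reduced_word al th w ->
  [/\ (forall a, a \in Phi -> 0 <= pairing l a ->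
         (count (pred1 a) (chain al th w))%:R = pairing l a /\
         count (pred1 (- a)) (chain al th w) = 0%N),
      (dominant Phi al l -> forall b, b \in chain al th w -> pos_root Phi al b)
    & (antidominant Phi al l -> forall b, b \in chain al th w -> pos_root Phi al (- b))].
Proof.
move=> Hwt Hdec Hred.
have [x Hx] := alc_ex.
have P1 a : a \in Phi -> 0 <= pairing l a ->
    (count (pred1 a) (chain al th w))%:R = pairing l a /\
    count (pred1 (- a)) (chain al th w) = 0%N.
  by move=> Ha Hl; exact: (count_lemma Hwt Hdec Hred Hx Ha Hl).
have inPhi b : b \in chain al th w -> b \in Phi.
  by rewrite /chain => /mapP[k _ ->]; exact: beta_in.
have notin b : b \in chain al th w -> count (pred1 b) (chain al th w) = 0%N -> False.
  by move=> Hb Hc; move: Hb; rewrite -has_pred1 has_count Hc.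
split => //.
- move=> Hd b Hb; case: (root_dich (inPhi _ Hb)) => // Hn.
  have Hl := Hd _ Hn.
  have [_ Hc] := P1 _ (root_opp (inPhi _ Hb)) Hl.
  by exfalso; rewrite opprK in Hc; exact: notin Hb Hc.
- move=> Hd b Hb; case: (root_dich (inPhi _ Hb)) => // Hp.
  have Hl := Hd _ Hp; rewrite pairingNl oppr_ge0 in Hl.
  have Hl' : 0 <= pairing l (- b) by rewrite pairingNr oppr_ge0.
  have [_ Hc] := P1 _ (root_opp (inPhi _ Hb)) Hl'.
  by exfalso; rewrite opprK in Hc; exact: notin Hb Hc.
Qed.
End Roots.

Unset Implicit Arguments.
Set Strict Implicit.

Theorem lemma6p2 (R : realType) (r : nat) (Phi : seq 'rV[R]_r)
  (al : 'I_r -> 'rV[R]_r) (th l : 'rV[R]_r) (w : seq (option 'I_r)) :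
  (0 < r)%N ->
  is_irred_cryst_root_system Phi ->
  is_simple_roots Phi al ->
  highest_coroot Phi al th ->
  weight Phi l ->
  decomp_vml Phi al th l w ->
  reduced_word al th w ->
  [/\ (forall a, a \in Phi -> 0 <= pairing l a ->
         (count (pred1 a) (chain al th w))%:R = pairing l a /\
         count (pred1 (- a)) (chain al th w) = 0%N),
      (dominant Phi al l -> forall b, b \in chain al th w -> pos_root Phi al b)
    & (antidominant Phi al l -> forall b, b \in chain al th w -> pos_root Phi al (- b))].
Proof.
move=> _ HPhi Hal Hth; exact: main_result.
Qed.
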